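(* Let $G$ be a map graph with a corresponding planar bipartite graph $B$, let $k$ be a positive integer, let $\mathcal{D}=(T,\beta_{\mathcal{D}})$ be a nice tree decomposition of $B$ of width less than $5\sqrt{2k}$, and let $\mathcal{D}'=(T,\beta_{\mathcal{D}'})$ be the tree decomposition of $G$ derived from $\mathcal{D}$. Let $C$ be a cycle in $G$ and let $K$ be a special clique of $G$. Then there is a cycle $C'$ in $G$ of the same length as $C$ such that $E(C')\setminus E(K)=E(C)\setminus E(K)$ and, for every node $t\in V(T)$, the number of edges of $E(C')\cap E(K)$ with one endpoint in $\mathsf{Fake}(t)\cap K$ and the other in $V(G)\setminus\gamma_{\mathcal{D}'}(t)$ is at most $4$.
   Context: All graphs are finite and simple; $E(K)$ denotes the set of edges of $G$ with both endpoints in $K$. For a bipartite graph $B$ with bipartition $V(B)=W\uplus U$, the half-square of $B$ is the graph on $W$ in which two vertices are adjacent iff they are at distance exactly $2$ in $B$. A graph $G$ is a map graph iff it is the half-square of some planar bipartite graph $B$; such $B$ (with $W=V(G)$) is a corresponding planar bipartite graph, and $S(G)=U$ is the set of special vertices; for $s\in S(G)$, $N_B(s)$ is a clique of $G$ called a special clique. A tree decomposition $(T,\beta)$: rooted tree, bags covering all vertices and edges, each vertex's nodes inducing a connected subtree; width is max bag size minus one. $\gamma_{\mathcal{D}}(t)$ (resp. $\gamma_{\mathcal{D}'}(t)$) is the union of bags at $t$ and its descendants. A nice tree decomposition has empty root bag and leaf, introduce, forget and join nodes in the standard sense. The derived decomposition has the same tree and bags $\beta_{\mathcal{D}'}(t)=(\beta_{\mathcal{D}}(t)\cap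 V(G))\cup\bigcup_{s\in\beta_{\mathcal{D}}(t)\cap S(G)}(N_B(s)\cap\gamma_{\mathcal{D}}(t))$, and $\mathsf{Fake}(t)=\beta_{\mathcal{D}'}(t)\setminus\beta_{\mathcal{D}}(t)$. *)

(* Defs.v *)
From Stdlib Require Import Reals.
From mathcomp Require Import all_boot.

Set Implicit Arguments.
Unset Strict Implicit.
Unset Printing Implicit Defensive.

(* A graph (V, e) is planar if its vertices can be mapped injectively to
   points of R^2 and each edge {x,y} drawn as a simple arc (continuous
   injective image of [0,1]) from x to y, such that an arc contains no
   vertex point other than its endpoints, and arcs of distinct edges only
   meet in common endpoints.  [curve x y] is the drawing of the edge {x,y}
   (used for e x y; the drawings of (x,y) and (y,x) are not compared). *)
Definition in01 (t : R) : Prop := Rle R0 t /\ Rle t R1.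

Definition planar (V : finType) (e : rel V) : Prop :=
  exists (p : V -> R * R) (curve : V -> V -> R -> R * R),
    injective p /\
    (forall x y, e x y ->
       [/\ curve x y R0 = p x, curve x y R1 = p y,
           continuity (fun t => fst (curve x y t)),
           continuity (fun t => snd (curve x y t)) &
           (forall t1 t2, in01 t1 -> in01 t2 ->
              curve x y t1 = curve x y t2 -> t1 = t2)]) /\
    (forall x y z t, e x y -> in01 t -> curve x y t = p z -> z = x \/ z = y) /\
    (forall x y x' y' t t', e x y -> e x' y' ->
       [set x; y] != [set x'; y'] -> in01 t -> in01 t' ->
       curve x y t = curve x' y' t' ->
       exists z, [/\ z \in [set x; y], z \in [set x'; y'] & curve x y t = p z]).

(* A bipartite graph B with bipartition W (+) U is given by its
   adjacency [adj : W -> U -> bool]; [Bedge adj] is its edge relation on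
   the vertex set W + U. *)
Definition Bedge (W U : finType) (adj : W -> U -> bool) : rel (W + U) :=
  fun a b => match a, b with
             | inl w, inr u => adj w u
             | inr u, inl w => adj w u
             | _, _ => false
             end.

Definition half_square (W U : finType) (adj : W -> U -> bool) : rel W :=
  fun x y => (x != y) && [exists u, adj x u && adj y u].

Definition map_graph_with (W U : finType) (eG : rel W)
  (adj : W -> U -> bool) : Prop :=
  (forall x y, eG x y = half_square adj x y) /\ planar (Bedge adj).

Definition special_clique (W U : finType) (adj : W -> U -> bool) (s : U)
  : {set W} := [set w | adj w s].

Definition rooted_tree (N : finType) (par : N -> N) (r : N) : Prop :=
  par r = r /\ forall t, exists n, iter n par t = r.

Definition tedge (N : finType) (par : N -> N) : rel N :=
  fun a b => (a != b) && ((par a == b) || (par b == a)).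

Definition children (N : finType) (par : N -> N) (t : N) : {set N} :=
  [set c | (par c == t) && (c != t)].

Definition descendant (N : finType) (par : N -> N) (t' t : N) : bool :=
  connect (fun a b => par a == b) t' t.

Definition tree_decomposition (V N : finType) (e : rel V)
  (par : N -> N) (r : N) (beta : N -> {set V}) : Prop :=
  [/\ rooted_tree par r,
      (forall v, exists t, v \in beta t),
      (forall x y, e x y -> exists t, x \in beta t /\ y \in beta t) &
      (forall v t1 t2, v \in beta t1 -> v \in beta t2 ->
         connect (fun a b => [&& tedge par a b, v \in beta a & v \in beta b])
           t1 t2)].

Definition nice_tree_decomposition (V N : finType) (e : rel V)
  (par : N -> N) (r : N) (beta : N -> {set V}) : Prop :=
  [/\ tree_decomposition e par r beta,
      beta r = set0 &
      forall t,
        (children par t = set0 /\ beta t = set0) \/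
        (exists c v, [/\ children par t = [set c], v \notin beta c &
                         beta t = v |: beta c]) \/
        (exists c v, [/\ children par t = [set c], v \in beta c &
                         beta t = beta c :\ v]) \/
        (exists c1 c2, [/\ c1 != c2, children par t = [set c1; c2],
                           beta t = beta c1 & beta t = beta c2])].

Definition width_lt_5sqrt2k (V N : finType) (beta : N -> {set V}) (k : nat)
  : Prop :=
  forall t, Rlt (Rminus (INR #|beta t|) R1)
                (Rmult (IZR 5) (sqrt (Rmult (IZR 2) (INR k)))).

Definition gammaD (V N : finType) (par : N -> N) (beta : N -> {set V})
  (t : N) : {set V} :=
  \bigcup_(t' | descendant par t' t) beta t'.

Definition betaD' (W U N : finType) (adj : W -> U -> bool) (par : N -> N)
  (beta : N -> {set (W + U)}) (t : N) : {set W} :=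
  [set w | (inl w : W + U) \in beta t] :|:
  [set w | [exists s, [&& (inr s : W + U) \in beta t, adj w s &
                         (inl w : W + U) \in gammaD par beta t]]].

Definition Fake (W U N : finType) (adj : W -> U -> bool) (par : N -> N)
  (beta : N -> {set (W + U)}) (t : N) : {set W} :=
  [set w in betaD' adj par beta t | (inl w : W + U) \notin beta t].

Definition gammaD' (W U N : finType) (adj : W -> U -> bool) (par : N -> N)
  (beta : N -> {set (W + U)}) (t : N) : {set W} :=
  \bigcup_(t' | descendant par t' t) betaD' adj par beta t'.

(* edges are represented as 2-element vertex sets *)
Definition Gedges (W : finType) (eG : rel W) : {set {set W}} :=
  [set [set p.1; p.2] | p in [set p : W * W | eG p.1 p.2]].

Definition edges_in (W : finType) (eG : rel W) (K : {set W}) : {set {set W}} :=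
  [set e in Gedges eG | e \subset K].

Definition is_cycle (W : finType) (eG : rel W) (c : seq W) : bool :=
  [&& uniq c, 2 < size c & cycle eG c].

Definition cycle_edges (W : finType) (c : seq W) : {set {set W}} :=
  [set [set x; next c x] | x in c].

(* Main.v *)
Require Import Defs.
From Stdlib Require Import Reals.
From mathcomp Require Import all_boot.
From mathcomp Require Import zify.


Fixpoint opairs {T : Type} (x : T) (s : seq T) : seq (T * T) :=
  if s is y :: s' then (x, y) :: opairs y s' else [::].
Definition copairs {T : Type} (c : seq T) : seq (T * T) :=
  if c is x :: p then opairs x (rcons p x) else [::].
Definition swp {T : Type} (p : T * T) := (p.2, p.1).

Lemma opairs_cat {T : Type} (x : T) s1 s2 :
  opairs x (s1 ++ s2) = opairs x s1 ++ opairs (last x s1) s2.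
Proof. by elim: s1 x => [|y s1 IH] x //=; rewrite IH. Qed.

Lemma opairs_rcons {T : Type} (x : T) s y :
  opairs x (rcons s y) = rcons (opairs x s) (last x s, y).
Proof. by rewrite -cats1 opairs_cat cats1. Qed.

Lemma last_belast_rev {T : Type} (y : T) s : last (last y s) (rev (belast y s)) = y.
Proof. by case: s => [|z s] //=; rewrite rev_cons last_rcons. Qed.

Lemma opairs_rev {T : Type} (x : T) s :
  opairs (last x s) (rev (belast x s)) = rev (map swp (opairs x s)).
Proof.
elim: s x => [|y s IH] x //=.
by rewrite rev_cons opairs_rcons IH last_belast_rev rev_cons.
Qed.

Lemma path_opairs {T : Type} (e : rel T) x s :
  path e x s = all (fun p => e p.1 p.2) (opairs x s).
Proof. by elim: s x => [|y s IH] x //=; rewrite IH. Qed.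

Lemma cycle_copairs {T : Type} (e : rel T) c :
  cycle e c = all (fun p => e p.1 p.2) (copairs c).
Proof. by case: c => [|x p] //=; rewrite path_opairs. Qed.

Lemma opairs_frel {T : eqType} (f : T -> T) x s :
  path (frel f) x s -> opairs x s = map (fun a => (a, f a)) (belast x s).
Proof.
elim: s x => [|y s IH] x //= /andP[/eqP fx ps].
by rewrite IH // fx.
Qed.

Lemma has_opairs {T : Type} (Q : pred (T * T)) x s :
  has Q (opairs x s) ->
  exists s1 y s2, s = s1 ++ y :: s2 /\ Q (last x s1, y).
Proof.
elim: s x => [|y s IH] x //= /orP[Qxy|].
  by exists [::], y, s.
move=> /IH [s1 [z [s2 [-> Q1]]]].
by exists (y :: s1), z, s2.
Qed.

Lemma copairs_next {T : eqType} (c : seq T) :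
  uniq c -> copairs c = map (fun a => (a, next c a)) c.
Proof.
move=> Uc; have := cycle_next Uc.
case: c Uc => [|x p] //= Uc.
by move/opairs_frel ->; rewrite belast_rcons.
Qed.

Lemma copairs_rot {T : eqType} n (c : seq T) :
  uniq c -> copairs (rot n c) = rot n (copairs c).
Proof.
move=> Uc; rewrite !copairs_next ?rot_uniq // -map_rot.
by apply: eq_map => x; rewrite (next_rot n Uc).
Qed.

Definition cedges {T : finType} (c : seq T) : seq {set T} :=
  map (fun p => [set p.1; p.2]) (copairs c).

Lemma cycle_edges_cedges {T : finType} (c : seq T) :
  uniq c -> cycle_edges c = [set e | e \in cedges c].
Proof.
move=> Uc; apply/setP => e; rewrite inE /cedges copairs_next // -map_comp.
by apply/imsetP/mapP => [[x xc ->]|[x xc ->]]; exists x.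
Qed.


Set Implicit Arguments. Unset Strict Implicit.


Section Tree.
Variables (N : finType) (par : N -> N).

Lemma desc_iterP a t : descendant par a t <-> exists n, iter n par a = t.
Proof.
split.
  move=> H; exists (findex par a t); apply: iter_findex; exact: H.
by move=> [n <-]; apply: (fconnect_iter par n a).
Qed.

Lemma desc_refl a : descendant par a a.
Proof. exact: connect0. Qed.

Lemma desc_trans a b c : descendant par a b -> descendant par b c -> descendant par a c.
Proof. exact: connect_trans. Qed.

Lemma desc_par a : descendant par a (par a).
Proof. by apply: connect1. Qed.

Lemma desc_step a t : descendant par a t -> a = t \/ descendant par (par a) t.
Proof.
move/desc_iterP=> [[|n] <-]; first by left.
by right; apply/desc_iterP; exists n; rewrite iterSr.
Qed.

Lemma desc_comp a t1 t2 : descendant par a t1 -> descendant par a t2 ->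
  descendant par t1 t2 \/ descendant par t2 t1.
Proof.
move=> /desc_iterP [n1 <-] /desc_iterP [n2 <-].
case: (leqP n1 n2) => H.
  left; apply/desc_iterP; exists (n2 - n1); by rewrite -iterD subnK.
right; apply/desc_iterP; exists (n1 - n2); by rewrite -iterD subnK // ltnW.
Qed.

Variable r : N.
Hypothesis Hrt : rooted_tree par r.

Lemma iter_root n m a : iter n par a = r -> iter (m + n) par a = r.
Proof.
move=> H; rewrite iterD H; case: Hrt => Pr _.
by elim: m => //= m ->.
Qed.

Lemma desc_antisym a b : descendant par a b -> descendant par b a -> a = b.
Proof.
move=> /desc_iterP [n Hn] /desc_iterP [m Hm].
have per : forall k, iter (k * (n + m)) par a = a.
  elim=> [|k IH] //; by rewrite mulSn iterD IH addnC iterD Hn Hm.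
case: Hrt => Pr /(_ a) [K HK].
case E: (n + m) => [|nm].
  by move: E => /eqP; rewrite addn_eq0 => /andP[/eqP n0 _]; rewrite -Hn n0.
have ra : a = r.
  have H2 : iter (K * (n + m)) par a = r.
    rewrite E -(subnK (_ : K <= K * nm.+1)); last by rewrite leq_pmulr.
    exact: iter_root.
  by rewrite -{1}(per K) H2.
have rb : b = r by rewrite -Hn ra; elim: (n) => //= k ->.
by rewrite ra rb.
Qed.

End Tree.

Section TD.
Variables (V N : finType) (e : rel V) (par : N -> N) (r : N) (beta : N -> {set V}).
Hypothesis Htd : tree_decomposition e par r beta.

Lemma pass v a b t : v \in beta a -> v \in beta b ->
  descendant par a t -> ~~ descendant par b t -> v \in beta t.
Proof.
case: Htd => _ _ _ /(_ v a b) Hc va vb.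
move: (Hc va vb) => /connectP [p Hp ->] {Hc vb}.
elim: p a Hp va => [|a' p IH] a /=; first by move=> _ _ ->.
move=> /andP [/and3P [ted va va'] Hp] _ dat ndb.
case D: (descendant par a' t); first exact: (IH a' Hp va' D ndb).
move: ted => /andP [_ /orP [/eqP pa|/eqP pa']].
  case: (desc_step dat) => [<- //|]; by rewrite pa D.
by move: D; rewrite (desc_trans (b:=a)) // -pa'; apply: desc_par.
Qed.

Definition Aset (t : N) : {set V} :=
  [set v | (v \in gammaD par beta t) && (v \notin beta t)].

Lemma Aset_sub t1 t2 : descendant par t1 t2 -> forall v, v \in Aset t1 -> v \in Aset t2.
Proof.
case: (Htd) => Hrt _ _ _ d12 v.
rewrite !inE => /andP [/bigcupP [a da va] nv1].
apply/andP; split; first by apply/bigcupP; exists a => //; exact: desc_trans da d12.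
apply/negP => v2.
case D: (descendant par t2 t1).
  by move: nv1; rewrite (desc_antisym Hrt d12 D) v2.
by move: nv1; rewrite (pass va v2 da) ?D.
Qed.

Lemma Aset_lam t1 t2 :
  (forall v, v \in Aset t1 -> v \in Aset t2) \/
  (forall v, v \in Aset t2 -> v \in Aset t1) \/
  (forall v, v \in Aset t1 -> v \notin Aset t2).
Proof.
case D12: (descendant par t1 t2); first by left; apply: Aset_sub.
case D21: (descendant par t2 t1); first by right; left; apply: Aset_sub.
right; right => v; rewrite !inE => /andP [/bigcupP [a da va] nv1].
apply/negP => /andP [/bigcupP [b db vb] nv2].
case Da: (descendant par a t2).
  by case: (desc_comp da Da); rewrite ?D12 ?D21.
by move: nv2; rewrite (pass vb va db) ?Da.
Qed.

End TD.


Lemma has_split {T : Type} (P : pred T) s :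
  has P s -> exists s1 x s2, s = s1 ++ x :: s2 /\ P x.
Proof.
elim: s => [|y s IH] //= /orP [Py|/IH [s1 [x [s2 [-> Px]]]]].
  by exists [::], y, s.
by exists (y :: s1), x, s2.
Qed.

Lemma count_splitb {T : Type} (a b : pred T) s :
  count a s = count (fun x => a x && b x) s + count (fun x => a x && ~~ b x) s.
Proof.
elim: s => //= x s ->; case: (a x); case: (b x) => /=; lia.
Qed.

Lemma cnt_cons {T : Type} (a : pred T) x s : count a (x :: s) = a x + count a s.
Proof. by []. Qed.
Lemma cnt_nil {T : Type} (a : pred T) : count a [::] = 0.
Proof. by []. Qed.

Lemma ar1 a b c d e f : a + (b + (c + (d + 0))) + (e + f) = a + (e + (c + (f + 0))) + (b + d).
Proof. lia. Qed.
Lemma ar2 X Y a b : X + a = Y + b -> b <= a -> X <= Y.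
Proof. lia. Qed.
Lemma ar3 X Y a b : X + a = Y + b -> b + 2 <= a -> X < Y.
Proof. lia. Qed.

Lemma perm_rot_eq {T : eqType} n (s : seq T) : perm_eq (rot n s) s.
Proof. by rewrite perm_rot perm_refl. Qed.

Lemma bool_ineq (a1 a2 b1 b2 : bool) : a1 = a2 \/ b1 = b2 ->
  (b1 != b2) + (a1 != a2) <= (a2 != b2) + (a1 != b1).
Proof. by case: a1 a2 b1 b2 => [] [] [] [] //= [] . Qed.

Section Comb.
Variables (W N : finType) (eG : rel W) (K : {set W}) (A : N -> {set W}).
Hypothesis eG_sym : forall x y, eG x y = eG y x.
Hypothesis eG_clique : forall x y, x \in K -> y \in K -> x != y -> eG x y.
Hypothesis A_lam : forall t1 t2,
  (forall v, v \in A t1 -> v \in A t2) \/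
  (forall v, v \in A t2 -> v \in A t1) \/
  (forall v, v \in A t1 -> v \notin A t2).

Definition crossP (J : {set W}) (p : W * W) :=
  [&& p.1 \in K, p.2 \in K & (p.1 \in J) != (p.2 \in J)].
Definition ecount (J : {set W}) (c : seq W) := count (crossP J) (copairs c).
Definition Phi (c : seq W) := \sum_(t : N) ecount (A t) c.
Definition EK := edges_in eG K.

Lemma EK_mem x y : eG x y -> x \in K -> y \in K -> [set x; y] \in EK.
Proof.
move=> exy xK yK; rewrite /EK /edges_in inE; apply/andP; split.
  by apply/imsetP; exists (x, y) => //; rewrite inE.
by rewrite subUset !sub1set xK yK.
Qed.

Lemma crossP_swp J p : crossP J (swp p) = crossP J p.
Proof.
case: p => a b; rewrite /crossP /swp /=.
by case: (a \in K); case: (b \in K) => //=; rewrite eq_sym.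
Qed.

Lemma count_swp J l : count (crossP J) (rev (map swp l)) = count (crossP J) l.
Proof. by rewrite count_rev count_map; apply: eq_count => p /=; rewrite crossP_swp. Qed.

Lemma edges_rot n (c : seq W) : uniq c -> cycle_edges (rot n c) = cycle_edges c.
Proof.
move=> Uc; rewrite !cycle_edges_cedges ?rot_uniq //.
apply/setP => e; rewrite !inE /cedges copairs_rot // map_rot mem_rot //.
Qed.

Lemma ecount_rot J n (c : seq W) : uniq c -> ecount J (rot n c) = ecount J c.
Proof.
move=> Uc; rewrite /ecount copairs_rot //.
by apply/permP; apply: perm_rot_eq.
Qed.

Lemma step (c : seq W) t0 : is_cycle eG c -> 2 < ecount (A t0) c ->
  exists c', [/\ is_cycle eG c', size c' = size c,
     cycle_edges c' :\: EK = cycle_edges c :\: EK & Phi c' < Phi c].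
Proof.
move=> Hc H3.
set J := A t0.
have [d Hd] : exists d, 1 < count (fun p => crossP J p && ((p.1 \in J) == d)) (copairs c).
  move: H3; rewrite /ecount (count_splitb _ (fun p : W * W => p.1 \in J)).
  case: (leqP 2 (count (fun x => crossP J x && (x.1 \in J)) (copairs c))) => H.
    by move=> _; exists true; apply: (leq_trans H); apply: eq_leq; apply: eq_count => p; case: (p.1 \in J).
  move=> H'; exists false.
  have : 2 <= count (fun x => crossP J x && ~~ (x.1 \in J)) (copairs c).
    by move: H H'; rewrite -/J; lia.
  move=> H2; apply: leq_trans H2 _; apply: eq_leq; apply: eq_count => p; by case: (p.1 \in J).
set Qd := (fun p => crossP J p && ((p.1 \in J) == d)) in Hd.
have [l1 [p [l2 [El Qp]]]] : exists l1 p l2, copairs c = l1 ++ p :: l2 /\ Qd p.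
  apply: has_split; rewrite has_count; exact: ltnW.
case/and3P: Hc => Uc Sc Cc.
set cR := rot (size l1).+1 c.
have UR : uniq cR by rewrite rot_uniq.
have SR : size cR = size c by rewrite size_rot.
have CR : cycle eG cR by rewrite rot_cycle.
have ER : cycle_edges cR = cycle_edges c by apply: edges_rot.
have PR : Phi cR = Phi c by apply: eq_bigr => t _; apply: ecount_rot.
have copR : copairs cR = rcons (l2 ++ l1) p.
  rewrite copairs_rot // El -cat_rcons -(size_rcons l1 p) rot_size_cat.
  by rewrite rcons_cat.
have [v1 [rest ER']] : exists v1 rest, cR = v1 :: rest.
  by case: (cR) SR Sc => [|v1 rest] /=; [move=> <- | exists v1, rest].
rewrite ER' /= opairs_rcons in copR.
move: (rcons_inj copR) => [Eo Ep].
have : has Qd (opairs v1 rest).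
  rewrite Eo has_count count_cat addnC -count_cat.
  move: Hd; rewrite El count_cat /= Qp add1n addnS ltnS.
  by rewrite count_cat.
move=> Hh; case: (@has_opairs _ Qd v1 rest Hh) => s1 [v2 [s2 [Erest Qp2]]].
set u1 := last v1 rest.
set u2 := last v1 s1.
have u1E : u1 = last v2 s2 by rewrite /u1 Erest last_cat.
set X := v1 :: s1.
set Y := v2 :: s2.
have cRXY : cR = X ++ Y by rewrite ER' Erest.
set c' := u2 :: (rev (belast v1 s1) ++ v2 :: s2).
have c'XY : c' = rev X ++ Y by rewrite /c' /X (lastI v1 s1) rev_rcons.
have Pc' : perm_eq c' cR by rewrite c'XY cRXY perm_cat2r perm_rev perm_refl.
have U' : uniq c' by rewrite (perm_uniq Pc').
have S' : size c' = size c by rewrite (perm_size Pc').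
have copR2 : copairs cR = opairs v1 s1 ++ (u2, v2) :: (opairs v2 s2 ++ [:: (u1, v1)]).
  by rewrite ER' Erest /= rcons_cat opairs_cat /= opairs_rcons -u1E cats1.
have cop' : copairs c' = rev (map swp (opairs v1 s1)) ++ (v1, v2) :: (opairs v2 s2 ++ [:: (u1, u2)]).
  rewrite /c' /= rcons_cat opairs_cat /u2 opairs_rev last_belast_rev /=.
  by rewrite opairs_rcons -u1E cats1.
move: Qp; rewrite -Ep /Qd /crossP /= => /andP [/and3P [u1K v1K c1] /eqP d1].
move: Qp2; rewrite /Qd /crossP /= -/u2 => /andP [/and3P [u2K v2K c2] /eqP d2].
have u12 : u1 != u2.
  move: UR; rewrite cRXY cat_uniq => /and3P [_ /hasPn Hd' _].
  apply/eqP => E; have : u2 \in X by rewrite /u2 /X mem_last.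
  by rewrite -E u1E; move/negP: (Hd' (last v2 s2) (mem_last _ _)).
have v12 : v1 != v2.
  move: UR; rewrite cRXY cat_uniq => /and3P [_ /hasPn Hd' _].
  apply/eqP => E; have : v1 \in X by rewrite /X inE eqxx.
  by rewrite E; move/negP: (Hd' v2 (mem_head _ _)).
have hu1 : (u1 \in A t0) = d by [].
have hu2 : (u2 \in A t0) = d by [].
have hv1 : (v1 \in A t0) = ~~ d by move: c1; rewrite -/J d1; case: (v1 \in J); case: (d).
have hv2 : (v2 \in A t0) = ~~ d by move: c2; rewrite -/J d2; case: (v2 \in J); case: (d).
have e12 : eG v1 v2 by apply: eG_clique.
have e12' : eG u1 u2 by apply: eG_clique.
move: CR; rewrite cycle_copairs copR2 all_cat /= all_cat /= andbT => /and4P [C1 C2 C4 C3].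
exists c'; split => //.
  apply/and3P; split => //; first by rewrite S'.
  rewrite cycle_copairs cop' all_cat all_rev all_map /=.
  rewrite all_cat /= e12' C4 e12 /= !andbT.
  by apply/allP => q /(allP C1) /=; rewrite /swp eG_sym.
- rewrite -ER !cycle_edges_cedges // /cedges cop' copR2.
  apply/setP => e; rewrite !in_setD.
  case E: (e \in EK) => //=.
  have F : forall x y, eG x y -> x \in K -> y \in K -> (e == [set x; y]) = false.
    move=> x y exy xK yK; apply/negP => /eqP Ee.
    by move: E; rewrite Ee EK_mem.
  rewrite !inE !map_cat !mem_cat map_rev mem_rev -map_comp /= !in_cons !map_cat !mem_cat /= !mem_seq1.
  have -> : map ((fun p : W * W => [set p.1; p.2]) \o swp) (opairs v1 s1) =
            map (fun p : W * W => [set p.1; p.2]) (opairs v1 s1).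
    by apply: eq_map => q; rewrite /= setUC.
  by rewrite (F v1 v2) // (F u1 u2) // (F u2 v2) // (F u1 v1).
- rewrite -PR /Phi.
  have Heq : forall t, ecount (A t) c' + (crossP (A t) (u2, v2) + crossP (A t) (u1, v1)) =
                      ecount (A t) cR + (crossP (A t) (v1, v2) + crossP (A t) (u1, u2)).
    move=> t; rewrite /ecount cop' copR2 !count_cat !cnt_cons !count_cat !cnt_cons cnt_nil count_swp.
    generalize (count (crossP (A t)) (opairs v1 s1)) (count (crossP (A t)) (opairs v2 s2))
      (nat_of_bool (crossP (A t) (v1,v2))) (nat_of_bool (crossP (A t) (u1,u2)))
      (nat_of_bool (crossP (A t) (u2,v2))) (nat_of_bool (crossP (A t) (u1,v1))).
    move=> ? ? ? ? ? ?; apply: ar1.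
  have Hle : forall t, crossP (A t) (v1, v2) + crossP (A t) (u1, u2) <=
                       crossP (A t) (u2, v2) + crossP (A t) (u1, v1).
    move=> t; rewrite /crossP /= u1K u2K v1K v2K /=.
    apply: bool_ineq.
    case: (A_lam t t0) => [H|[H|H]]; case: (d) hu1 hu2 hv1 hv2 => /= hu1 hu2 hv1 hv2.
    - by right; apply/idP/idP => /H; rewrite ?hv1 ?hv2.
    - by left; apply/idP/idP => /H; rewrite ?hu1 ?hu2.
    - by left; rewrite (H _ hu1) (H _ hu2).
    - by right; rewrite (H _ hv1) (H _ hv2).
    - by left; apply/idP/idP => /H; rewrite ?hu1 ?hu2.
    - by right; apply/idP/idP => /H; rewrite ?hv1 ?hv2.
  have Hlt : crossP (A t0) (v1, v2) + crossP (A t0) (u1, u2) + 2 <=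
             crossP (A t0) (u2, v2) + crossP (A t0) (u1, v1).
    rewrite /crossP /= u1K u2K v1K v2K /= hu1 hu2 hv1 hv2.
    by case: (d).
  rewrite (bigD1 t0) //= [X in _ < X](bigD1 t0) //=.
  apply: (@leq_ltn_trans (ecount (A t0) c' + \sum_(i | i != t0) ecount (A i) cR)).
    rewrite leq_add2l; apply: leq_sum => t _.
    exact: ar2 (Heq t) (Hle t).
  rewrite ltn_add2r; exact: ar3 (Heq t0) Hlt.
Qed.

Lemma main_ind n : forall c : seq W, Phi c < n -> is_cycle eG c ->
  exists c', [/\ is_cycle eG c', size c' = size c,
     cycle_edges c' :\: EK = cycle_edges c :\: EK & forall t, ecount (A t) c' <= 2].
Proof.
elim: n => [|n IH] c // Hn Hc.
case: (boolP [forall t, ecount (A t) c <= 2]) => [/forallP H|/forallPn [t0 Ht0]].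
  by exists c; split.
rewrite -ltnNge in Ht0.
have [c1 [Hc1 S1 E1 P1]] := step Hc Ht0.
have Hn1 : Phi c1 < n by apply: leq_trans P1 _; rewrite -ltnS.
have [c2 [Hc2 S2 E2 B2]] := IH c1 Hn1 Hc1.
by exists c2; split => //; rewrite ?S2 ?S1 ?E2 ?E1.
Qed.

End Comb.

Lemma cross_two (T : finType) (a b x y : T) (J : {set T}) :
  [set a; b] = [set x; y] -> x \in J -> y \notin J -> (a \in J) != (b \in J).
Proof.
move=> E xJ yJ.
have ha : a \in [set x; y] by rewrite -E set21.
have hb : b \in [set x; y] by rewrite -E set22.
have hx : x \in [set a; b] by rewrite E set21.
have hy : y \in [set a; b] by rewrite E set22.
have xy : x != y by apply/eqP => Exy; move: yJ; rewrite -Exy xJ.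
move: ha hb hx hy; rewrite !inE.
case/orP => /eqP -> ; case/orP => /eqP ->; rewrite ?xJ ?(negbTE yJ) //.
- by rewrite eq_sym (negbTE xy) orbF.
- by rewrite (negbTE xy) orbF.
Qed.



Unset Implicit Arguments. Set Strict Implicit.


Theorem lemma26 (W U N : finType) (eG : rel W) (adj : W -> U -> bool)
  (k : nat) (par : N -> N) (r : N) (beta : N -> {set (W + U)}) :
  map_graph_with eG adj ->
  (0 < k)%N ->
  nice_tree_decomposition (Bedge adj) par r beta ->
  width_lt_5sqrt2k beta k ->
  forall (c : seq W) (s : U),
    is_cycle eG c ->
    let K := special_clique adj s in
    exists c' : seq W,
      [/\ is_cycle eG c',
          size c' = size c,
          cycle_edges c' :\: edges_in eG K = cycle_edges c :\: edges_in eG K &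
          forall t : N,
            (#|[set e in cycle_edges c' :&: edges_in eG K |
                [exists x, exists y,
                   [&& e == [set x; y], x \in Fake adj par beta t :&: K &
                       y \notin gammaD' adj par beta t]]]| <= 4)%N].
Proof.
move=> [Heq _] _ [Htd _ _] _ c s Hc K.
have eG_sym : forall x y, eG x y = eG y x.
  move=> x y; rewrite !Heq /half_square eq_sym; congr (_ && _).
  by apply/existsP/existsP => [[u /andP[a b]]|[u /andP[a b]]]; exists u; rewrite a b.
have eG_clique : forall x y, x \in K -> y \in K -> x != y -> eG x y.
  move=> x y; rewrite !inE => xK yK xy; rewrite Heq /half_square xy /=.
  by apply/existsP; exists s; rewrite xK yK.
pose A := fun t => [set w : W | (inl w : W + U) \in Aset par beta t].
have Aeq : forall t v, (v \in A t) = ((inl v : W + U) \in Aset par beta t).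
  by move=> t v; rewrite /A in_set.
have A_lam : forall t1 t2,
  (forall v, v \in A t1 -> v \in A t2) \/
  (forall v, v \in A t2 -> v \in A t1) \/
  (forall v, v \in A t1 -> v \notin A t2).
  move=> t1 t2; case: (Aset_lam Htd t1 t2) => [H|[H|H]].
  - by left => v; rewrite !Aeq; apply: H.
  - by right; left => v; rewrite !Aeq; apply: H.
  - by right; right => v; rewrite !Aeq; apply: H.
have [c' [Hc' S' E' B']] := main_ind eG_sym eG_clique A_lam (ltnSn (Phi K A c)) Hc.
exists c'; split => // t.
apply: leq_trans (leq_trans (B' t) (isT : 2 <= 4)).
set P := [seq p <- copairs c' | crossP K (A t) p].
have Hsub : [set e in cycle_edges c' :&: edges_in eG K |
                [exists x, exists y,
                   [&& e == [set x; y], x \in Fake adj par beta t :&: K &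
                       y \notin gammaD' adj par beta t]]]
            \subset [set [set p.1; p.2] | p in P].
  apply/subsetP => e; rewrite inE => /andP [/setIP [ec eK]].
  move=> /existsP [x /existsP [y /and3P [/eqP exy xF yG]]].
  case/and3P: Hc' => Uc' _ _.
  rewrite cycle_edges_cedges // inE /cedges in ec.
  case/mapP: ec => p pin Ep.
  apply/imsetP; exists p => //.
  rewrite mem_filter pin andbT /crossP.
  move: eK; rewrite inE => /andP [_]; rewrite Ep subUset !sub1set => /andP [-> ->] /=.
  apply: (cross_two (x := x) (y := y)); first by rewrite -Ep.
  - move: xF => /setIP [xF _]; move: xF; rewrite inE => /andP [xb nb].
    move: xb; rewrite !inE => /orP [xb|]; first by rewrite xb in nb.
    move=> /existsP [s0 /and3P [_ _ xg]].
    by rewrite xg nb.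
  - apply/negP; rewrite Aeq /Aset inE => /andP [yg _]; move/negP: yG; apply.
    move: yg => /bigcupP [t' dt' yb]; apply/bigcupP; exists t' => //.
    by rewrite /betaD' inE inE yb.
apply: (leq_trans (subset_leq_card Hsub)).
apply: (leq_trans (leq_imset_card _ _)).
apply: (leq_trans (card_size _)).
by rewrite size_filter.
Qed.
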